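(* In the setting and notation described in the context, let $c\in G_n/\!/K_n$ and $d\in G_k/\!/K_k$ with representatives $g\in G_n$, $h\in G_k$. Then $$B[c]*B[d]=\sum_{\lambda\in\mathrm{PB}(J_k,J_n)} B\big[\,\overline{\overline{g\circledast_\lambda h}}\,\big].$$
   Context: Let $I$ be a finite set, $X$ a finite or countable set, $V=X\sqcup(I\times\mathbb{N})$, $V_n=X\sqcup(I\times J_n)$ with $J_n=\{1,\dots,n\}$. $S_\infty$ (finitely supported permutations of $\mathbb{N}$) acts on $V$ by $\sigma(i,m)=(i,\sigma(m))$ on $I\times\mathbb{N}$ and trivially on $X$; $S_n\subset S_\infty$ permutes $J_n$. $G_\infty$ is a subgroup of the group of finitely supported permutations of $V$ containing $S_\infty$; $G_n$ is the set of elements of $G_\infty$ fixing every point outside $V_n$; $K_n=S_n$; $G_n/\!/K_n$ is the set of orbits of $K_n$ on $G_n$ under conjugation, and $\overline{\overline{r}}$ denotes the class of $r$. Local bijections: a local bijection is a pair $((\omega,\Omega))$ where $\Omega=X\cup(I\times F)$ for a finite $F\subset\mathbb{N}$ and $\omega:\Omega\to\Omega$ is a bijection; $\tilde\omega$ denotes its extension to $V$ fixing all points outside $\Omega$. Their product is $((\omega,\Omega))\circ((\mu,M))=((\tilde\omega\tilde\mu|_{\Omega\cup M},\Omega\cup M))$. Consider formal series $\sum a_{((\omega,\Omega))}((\omega,\Omega))$ with complex coefficients, with convolution $\big(\sum a\,((\omega,\Omega))\big)*\big(\sum b\,((\mu,M))\big)=\sum c_{((\nu,N))}((\nu,N))$,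 $c_{((\nu,N))}=\sum a_{((\omega,\Omega))}b_{((\mu,M))}$ over pairs with $\Omega\cup M=N$ and $\tilde\omega\tilde\mu=\tilde\nu$ (these sums are finite for the products below). For an injective map $\sigma:J_n\to\mathbb{N}$, extend it to the bijection $V_n\to X\cup(I\times\sigma(J_n))$, $(i,m)\mapsto(i,\sigma(m))$, identity on $X$; for $g\in G_n$ write $\sigma((g,V_n))\sigma^{-1}=((\sigma g\sigma^{-1},X\cup(I\times\sigma(J_n))))$. For $c\in G_n/\!/K_n$ with representative $g$ define $B[c]=\sum_{\Omega\subset\mathbb{N},\,\#\Omega=n}\ \sum_{\sigma:J_n\to\Omega\text{ bijective}}\sigma((g,V_n))\sigma^{-1}$ (independent of the representative). A partial bijection $Y\to Z$ is a bijection between a subset $\mathrm{dom}\,\lambda\subseteq Y$ and a subset $\mathrm{im}\,\lambda\subseteq Z$ (empty allowed), $\mathrm{rk}\,\lambda=\#\mathrm{dom}\,\lambda$; $\mathrm{PB}(Y,Z)$ is the set of them; composition: $w\in\mathrm{dom}(\lambda\mu)$ iff $w\in\mathrm{dom}\,\mu$ and $\mu(w)\in\mathrm{dom}\,\lambda$, then $\lambda\mu(w)=\lambda(\mu(w))$. Injective maps and their inverses are viewed as partial bijections. For $g\in G_n$, $h\in G_k$ and $\lambda\in\mathrm{PB}(J_k,J_n)$ of rank $d$, choose injective maps $\sigma_0:J_n\to J_{n+k-d}$, $\tau_0:J_k\to J_{n+k-d}$ with $\sigma_0^{-1}\tau_0=\lambda$ as partial bijections, and let $\overline{\overline{g\circledast_\lambda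 h}}\in G_{n+k-d}/\!/K_{n+k-d}$ be the class of the permutation $\tilde\nu$ where $((\nu,V_{n+k-d}))=\sigma_0((g,V_n))\sigma_0^{-1}\circ\tau_0((h,V_k))\tau_0^{-1}$; this class does not depend on the choice of $\sigma_0,\tau_0$. *)

(* Defs.v *)
From HB Require Import structures.
From mathcomp Require Import all_boot all_order all_algebra.
From mathcomp Require Import finmap.
From Stdlib Require ClassicalEpsilon List.
Set Implicit Arguments. Unset Strict Implicit. Unset Printing Implicit Defensive.
Import GRing.Theory Num.Theory.
Local Open Scope ring_scope.
Local Open Scope fset_scope.

Section Defs.
Variables (I : finType) (X : countType).

(* V = X ⊔ (I × ℕ); ℕ is modelled by nat, J_n = {0,..,n-1}. *)
Definition V := (X + (I * nat))%type.

Definition inV (n : nat) (v : V) : bool :=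
  match v with inl _ => true | inr (_, m) => (m < n)%N end.

Definition inOmega (F : {fset nat}) (v : V) : bool :=
  match v with inl _ => true | inr (_, m) => m \in F end.

Definition fin_suppV (f : V -> V) : Prop :=
  exists s : seq V, forall v, v \notin s -> f v = v.
Definition fin_suppN (p : nat -> nat) : Prop :=
  exists s : seq nat, forall m, m \notin s -> p m = m.

Definition SinfV (p : nat -> nat) (v : V) : V :=
  match v with inl x => inl x | inr (i, m) => inr (i, p m) end.

Definition is_Ginf (G : (V -> V) -> Prop) : Prop :=
  [/\ (forall f, G f -> bijective f /\ fin_suppV f),
      G id,
      (forall f g, G f -> G g -> G (f \o g)),
      (forall f f', G f -> cancel f f' -> cancel f' f -> G f') &
      (forall p, bijective p -> fin_suppN p -> G (SinfV p))].

Definition inGn (G : (V -> V) -> Prop) (n : nat) (g : V -> V) : Prop :=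
  G g /\ (forall v, ~~ inV n v -> g v = v).

(* Local bijections ((ω,Ω)), Ω = X ∪ (I×F), represented by (F, ω~) where ω~
   is the extension of ω to V fixing every point outside Ω. *)
Definition LB := ({fset nat} * (V -> V))%type.
Definition is_LB (x : LB) : Prop :=
  bijective x.2 /\ (forall v, ~~ inOmega x.1 v -> x.2 v = v).

Section Series.
Variable C : numClosedFieldType.

Definition series := LB -> C.

Definition has_fsum (A : Type) (P : A -> Prop) (f : A -> C) (s : C) : Prop :=
  exists l : seq A,
    [/\ List.NoDup l, (forall a, List.In a l -> P a),
        (forall a, P a -> f a <> 0 -> List.In a l) & s = \sum_(a <- l) f a].

Definition is_conv (a b c : series) : Prop :=
  forall nu : LB,
    has_fsum (fun p : LB * LB =>
                [/\ is_LB p.1, is_LB p.2, p.1.1 `|` p.2.1 = nu.1 &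
                    p.1.2 \o p.2.2 = nu.2])
             (fun p => a p.1 * b p.2) (c nu).

Definition pind (P : Prop) : C :=
  if ClassicalEpsilon.excluded_middle_informative P then 1 else 0.

Definition sV (n : nat) (s : 'I_n -> nat) (v : V) : V :=
  match v with
  | inl x => inl x
  | inr (i, m) => match (insub m : option 'I_n) with
                  | Some j => inr (i, s j)
                  | None => v end
  end.

(* the permutation σ g σ^{-1} of X ∪ (I × σ(J_n)), extended by the identity *)
Definition conjV (n : nat) (s : 'I_n -> nat) (g : V -> V) (v : V) : V :=
  match v with
  | inl _ => sV s (g v)
  | inr (i, m) => match [pick j : 'I_n | s j == m] with
                  | Some j => sV s (g (inr (i, nat_of_ord j)))
                  | None => v end
  end.

(* B[c] for the class c of g in G_n//K_n:
   sum over Ω ⊂ ℕ, #Ω = n, and bijections σ : J_n -> Ω of σ((g,V_n))σ^{-1};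
   its coefficient at ((ν,N)) counts the σ : J_n -> N bijective with
   σ g σ^{-1} = ν. *)
Definition Bser (n : nat) (g : V -> V) : series :=
  fun x => \sum_(s : {ffun 'I_n -> x.1} | injectiveb s && (#|` x.1| == n)%N)
             pind (conjV (fun j => val (s j)) g = x.2).

Definition isPB (k n : nat) (l : {ffun 'I_k -> option 'I_n}) : bool :=
  [forall j1, forall j2, ((l j1 != None) && (l j1 == l j2)) ==> (j1 == j2)].
Definition rkPB (k n : nat) (l : {ffun 'I_k -> option 'I_n}) : nat :=
  #|[pred j | l j != None]|.

Definition choiceOK (k n : nat) (l : {ffun 'I_k -> option 'I_n})
    (s0 : 'I_n -> nat) (t0 : 'I_k -> nat) : Prop :=
  [/\ injective s0, injective t0,
      (forall i, s0 i < n + k - rkPB l)%N,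
      (forall j, t0 j < n + k - rkPB l)%N &
      (forall j i, l j = Some i <-> t0 j = s0 i)].

End Series.
End Defs.

(* Main.v *)
Require Import Defs.
From HB Require Import structures.
From mathcomp Require Import all_boot all_order all_algebra.
From mathcomp Require Import finmap.
From Stdlib Require Import ClassicalEpsilon FunctionalExtensionality.
Set Implicit Arguments. Unset Strict Implicit. Unset Printing Implicit Defensive.

Section ConjV.
Variables (I : finType) (X : countType).
Local Notation V := (V I X).

Definition pres M (phi : V -> V) := forall v, inV M v -> inV M (phi v).

Lemma sV_lt M (s : 'I_M -> nat) i (j : 'I_M) :
  sV s (inr (i, nat_of_ord j) : V) = inr (i, s j).
Proof. by rewrite /sV valK. Qed.

Lemma sV_ge M (s : 'I_M -> nat) i m : ~~ (m < M)%N ->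
  sV s (inr (i, m) : V) = inr (i, m).
Proof. by move=> Hm; rewrite /sV insubF //; apply: negbTE. Qed.

Lemma inV_sV M M' (s : 'I_M -> nat) (w : V) :
  (forall j, s j < M')%N -> inV M w -> inV M' (sV s w).
Proof.
move=> Hs; case: w => [x|[i m]]; first by []. move=> Hm; have {}Hm : (m < M)%N := Hm.
have -> : m = nat_of_ord (Ordinal Hm) by [].
by rewrite sV_lt; apply: Hs.
Qed.

Lemma conjV_im M (s : 'I_M -> nat) phi i (j : 'I_M) : injective s ->
  conjV s phi (inr (i, s j) : V) = sV s (phi (inr (i, nat_of_ord j))).
Proof.
move=> inj; rewrite /conjV; case: pickP => [j' /eqP E|H].
  by rewrite (inj _ _ E).
by have := H j; rewrite eqxx.
Qed.

Lemma conjV_nim M (s : 'I_M -> nat) phi i m : (forall j, s j != m) ->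
  conjV s phi (inr (i, m) : V) = inr (i, m).
Proof.
move=> H; rewrite /conjV; case: pickP => [j' E|//].
by have := H j'; rewrite E.
Qed.

Lemma conjV_sV M (s : 'I_M -> nat) phi (w : V) : injective s -> inV M w ->
  conjV s phi (sV s w) = sV s (phi w).
Proof.
move=> inj; case: w => [x|[i m]]; first by []. move=> Hm; have {}Hm : (m < M)%N := Hm.
have -> : m = nat_of_ord (Ordinal Hm) by [].
by rewrite sV_lt conjV_im.
Qed.

Lemma conjV_cases M (s : 'I_M -> nat) (v : V) :
  (exists w, inV M w /\ v = sV s w) \/
  (exists i m, v = inr (i, m) /\ forall j, s j != m).
Proof.
case: v => [x|[i m]]; first by left; exists (inl x).
case: (pickP (fun j => s j == m)) => [j /eqP E|H].
  by left; exists (inr (i, nat_of_ord j)); split; [exact: ltn_ord | by rewrite sV_lt E].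
by right; exists i, m; split => // j; rewrite H.
Qed.

Lemma conjV_comp M (s : 'I_M -> nat) phi1 phi2 : injective s -> pres M phi2 ->
  forall v, conjV s (phi1 \o phi2) v = conjV s phi1 (conjV s phi2 v).
Proof.
move=> inj H2 v; case: (conjV_cases s v) => [[w [Hw ->]]|[i [m [-> Hm]]]].
  rewrite !conjV_sV //; apply: H2 => //.
by rewrite !conjV_nim.
Qed.

Lemma conjV_id M (s : 'I_M -> nat) : injective s -> conjV s (@id V) =1 id.
Proof.
move=> inj v; case: (conjV_cases s v) => [[w [Hw ->]]|[i [m [-> Hm]]]].
  by rewrite conjV_sV.
by rewrite conjV_nim.
Qed.

Lemma pres_conjV n M (s : 'I_n -> nat) g : injective s ->
  (forall j, s j < M)%N -> pres n g -> pres M (conjV s g).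
Proof.
move=> inj Hs Hg v; case: (conjV_cases s v) => [[w [Hw ->]]|[i [m [-> Hm]]]] Hv.
  by rewrite conjV_sV //; apply: inV_sV => //; apply: Hg.
by rewrite conjV_nim.
Qed.

Lemma sV_comp n M (s0 : 'I_n -> nat) (sg : 'I_M -> nat) (tau : 'I_n -> nat)
  (Hb : forall a, (s0 a < M)%N) :
  (forall a, tau a = sg (Ordinal (Hb a))) ->
  forall w : V, inV n w -> sV sg (sV s0 w) = sV tau w.
Proof.
move=> Ht; case=> [x|[i m]]; first by []. move=> Hm; have {}Hm : (m < n)%N := Hm.
have -> : m = nat_of_ord (Ordinal Hm) by [].
rewrite !sV_lt Ht.
exact: (sV_lt sg i (Ordinal (Hb (Ordinal Hm)))).
Qed.

Lemma conjV_conj n M (s0 : 'I_n -> nat) (sg : 'I_M -> nat) (tau : 'I_n -> nat)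
  (Hb : forall a, (s0 a < M)%N) g :
  injective s0 -> injective sg -> pres n g ->
  (forall a, tau a = sg (Ordinal (Hb a))) ->
  conjV sg (conjV s0 g) =1 conjV tau g.
Proof.
move=> i0 isg Hg Ht.
have it : injective tau.
  move=> a b; rewrite !Ht => /isg [] /i0; done.
move=> v; case: (conjV_cases tau v) => [[w [Hw ->]]|[i [m [-> Hm]]]].
  rewrite [RHS]conjV_sV // -(sV_comp Ht Hw) conjV_sV //; last by apply: inV_sV.
  by rewrite conjV_sV // (sV_comp Ht) //; apply: Hg.
rewrite [RHS]conjV_nim //.
case: (conjV_cases sg (inr (i, m))) => [[w [Hw E]]|[i' [m' [E Hm']]]].
  move: E Hw; case: w => [x|[i' m']]; first by [].
  move=> + Hm'; have {}Hm' : (m' < M)%N := Hm'.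
  have -> : m' = nat_of_ord (Ordinal Hm') by [].
  rewrite sV_lt => -[Ei Em]; subst i' m.
  rewrite conjV_im // conjV_nim ?sV_lt // => a.
  apply/eqP => E; have := Hm a; rewrite Ht.
  have -> : Ordinal (Hb a) = Ordinal Hm' by apply: val_inj.
  by rewrite eqxx.
by case: E => _ Em; subst m'; rewrite conjV_nim.
Qed.

End ConjV.

Section LB.
Variables (I : finType) (X : countType).
Local Notation V := (V I X).

Lemma conjV_ext M (s : 'I_M -> nat) (f1 f2 : V -> V) : f1 =1 f2 ->
  conjV s f1 =1 conjV s f2.
Proof.
move=> E [x|[i m]]; rewrite /conjV ?E //.
by case: pickP => // j _; rewrite E.
Qed.

Lemma pres_of n (f : V -> V) : bijective f -> (forall v, ~~ inV n v -> f v = v) ->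
  pres n f.
Proof.
move=> [f' fK f'K] Hf v Hv; apply/negPn/negP => Hfv.
have := Hf _ Hfv; move/(congr1 f'); rewrite !fK => E.
by move: Hfv; rewrite E Hv.
Qed.

Lemma inv_fix n (f f' : V -> V) : cancel f f' -> (forall v, ~~ inV n v -> f v = v) ->
  forall v, ~~ inV n v -> f' v = v.
Proof. by move=> fK Hf v Hv; rewrite -{1}(Hf _ Hv) fK. Qed.

End LB.

Import GRing.Theory.
Local Open Scope ring_scope.

Definition cb (P : Prop) : bool :=
  if excluded_middle_informative P then true else false.
Lemma cbP P : reflect P (cb P).
Proof. by rewrite /cb; case: excluded_middle_informative => H; constructor. Qed.

Lemma pindE (C : numClosedFieldType) P : pind C P = (cb P)%:R.
Proof. by rewrite /pind /cb; case: excluded_middle_informative. Qed.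

Definition ceq (T : Type) := T.
Definition ceqb T (x y : ceq T) : bool := cb (x = y).
Lemma ceqP T : Equality.axiom (@ceqb T).
Proof. by move=> x y; apply: cbP. Qed.
HB.instance Definition _ T := hasDecEq.Build (ceq T) (@ceqP T).

Definition imN n (u : 'I_n -> nat) : {fset nat} := [fset x in map u (enum 'I_n)]%fset.

Lemma imNP n (u : 'I_n -> nat) x : reflect (exists j, u j = x) (x \in imN u).
Proof.
rewrite /imN in_fset /=; apply: (iffP mapP) => [[j _ ->]|[j <-]]; first by exists j.
by exists j; rewrite ?mem_enum.
Qed.

Lemma card_imN n (u : 'I_n -> nat) : injective u -> #|` imN u| = n.
Proof.
move=> iu; rewrite /imN card_fseq undup_id; last by rewrite map_inj_uniq // enum_uniq.
by rewrite size_map -cardT card_ord.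
Qed.

Definition vf n (N : {fset nat}) (s : 'I_n -> N) : 'I_n -> nat := fun j => val (s j).

Lemma vf_inj n (N : {fset nat}) (s : 'I_n -> N) : injective s -> injective (vf s).
Proof. by move=> is' a b /val_inj /is'. Qed.

Lemma imN_sub n (N : {fset nat}) (s : 'I_n -> N) : (imN (vf s) `<=` N)%fset.
Proof. by apply/fsubsetP => x /imNP [j <-]; apply: fsvalP. Qed.

Lemma reindexB (C : numClosedFieldType) n (F N : {fset nat}) (sub : (F `<=` N)%fset)
    (Phi : ('I_n -> nat) -> C) :
  \sum_(s : {ffun 'I_n -> F} | injectiveb s && (#|` F| == n)%N) Phi (fun j => val (s j)) =
  \sum_(s : {ffun 'I_n -> N} | injectiveb s && (imN (fun j => val (s j)) == F)) Phi (fun j => val (s j)).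
Proof.
pose h := fun s : {ffun 'I_n -> F} => [ffun j => fincl sub (s j)] : {ffun 'I_n -> N}.
have hv : forall s j, val (h s j) = val (s j) by move=> s j; rewrite ffunE.
have hinj : injective h.
  by move=> s1 s2 E; apply/ffunP => j; apply: val_inj; rewrite -!hv E.
transitivity (\sum_(s in [set s : {ffun 'I_n -> F} | injectiveb s && (#|` F| == n)%N])
                 Phi (fun j => val (h s j))).
  apply: eq_big; first by move=> s; rewrite inE.
  move=> s _; by congr Phi; apply: functional_extensionality => j; rewrite hv.
rewrite -(big_imset (fun y : {ffun 'I_n -> N} => Phi (fun j => val (y j))) (in2W hinj)) /=; apply: eq_bigl => s.
apply/imsetP/andP => [[s1]|[/injectiveP is' /eqP HF]].
  rewrite inE => /andP [/injectiveP is1 /eqP HF] ->.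
  have ih : injective (vf (h s1)).
    by move=> a b; rewrite /vf !hv => /val_inj /is1.
  split; first by apply/injectiveP => a b E; apply: ih; rewrite /vf E.
  rewrite eqEfcard; apply/andP; split.
    by apply/fsubsetP => x /imNP [j <-]; rewrite hv; apply: fsvalP.
  by rewrite HF (card_imN ih).
have ex : forall j, exists y : F, val y = val (s j).
  move=> j; have Hj : val (s j) \in F by rewrite -HF; apply/imNP; exists j.
  by exists [` Hj]%fset.
have [s1 Hs1] := fin_all_exists ex.
exists (finfun s1).
  rewrite inE; apply/andP; split.
    by apply/injectiveP => a b; rewrite !ffunE => /(congr1 val); rewrite !Hs1 => /val_inj /is'.
  rewrite -HF card_imN //; apply: (@vf_inj _ _ s).
  by move=> a b; apply: is'.
by apply/ffunP => j; apply: val_inj; rewrite hv ffunE Hs1.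
Qed.

Lemma is_LB_conj (I : finType) (X : countType) n (u : 'I_n -> nat) (g : V I X -> V I X) :
  injective u -> bijective g -> (forall v, ~~ inV n v -> g v = v) ->
  is_LB (imN u, conjV u g).
Proof.
move=> iu bg fg; have pg := pres_of bg fg.
case: (bg) => g' gK g'K.
have pg' : pres n g' := pres_of (Bijective g'K gK) (inv_fix gK fg).
split.
  exists (conjV u g') => v /=.
    by rewrite -conjV_comp // (@conjV_ext _ _ _ _ _ id) ?conjV_id // => w /=; rewrite gK.
  by rewrite -conjV_comp // (@conjV_ext _ _ _ _ _ id) ?conjV_id // => w /=; rewrite g'K.
case=> [x|[i m]]; first by [].
move=> Hm; change (conjV u g (inr (i, m)) = inr (i, m)); rewrite conjV_nim // => j; apply/eqP => E; move/negP: Hm; apply.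
by change (m \in imN u); apply/imNP; exists j.
Qed.

Lemma In_mem (T : eqType) (s : seq T) a : List.In a s <-> a \in s.
Proof.
elim: s => //= b s IH; rewrite in_cons; split.
  by case=> [->|/IH ->]; rewrite ?eqxx ?orbT.
by case/orP => [/eqP ->|/IH]; auto.
Qed.

Lemma uniq_NoDup (T : eqType) (s : seq T) : uniq s -> List.NoDup s.
Proof.
elim: s => [|a s IH] /=; first by constructor.
case/andP => nas us; constructor; last exact: IH.
by move/In_mem; rewrite (negbTE nas).
Qed.

Lemma sum_cb (C : numClosedFieldType) (T : finType) (P : pred T) (Q : T -> Prop) :
  \sum_(x | P x) pind C (Q x) = \sum_(x | P x && cb (Q x)) 1.
Proof. by rewrite big_mkcondr; apply: eq_bigr => x _; rewrite pindE; case: cb. Qed.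

Lemma pick_nz (C : numClosedFieldType) (T : finType) (P : pred T) :
  \sum_(x | P x) (1 : C) != 0 -> exists x, P x.
Proof.
case: (pickP P) => [x Px _|H]; first by exists x.
by rewrite big_pred0 ?eqxx.
Qed.

Lemma sum_mem1 (C : numClosedFieldType) (T : eqType) (s : seq T) y :
  uniq s -> y \in s -> \sum_(a <- s) ((y == a)%:R : C) = 1.
Proof.
elim: s => [|a s IH] //= /andP [nas us]; rewrite in_cons big_cons => /orP [/eqP E|ys].
  subst y; rewrite eqxx big1_seq ?addr0 // => b /andP [_ bs].
  by case: eqP => // E; subst b; rewrite bs in nas.
have ya : y != a by apply/eqP => E; subst y; rewrite ys in nas.
by rewrite (negbTE ya) add0r IH.
Qed.
Section Main.
Variables (C : numClosedFieldType) (I : finType) (X : countType).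
Local Notation V := (V I X).
Variables (n k : nat) (g h : V -> V).
Hypotheses (pg : pres n g) (ph : pres k h).
Variables (N : {fset nat}) (nu2 : V -> V).

Local Notation TT := ({ffun 'I_n -> N} * {ffun 'I_k -> N})%type.

Definition Bp (x : TT) : bool :=
  [&& injectiveb x.1, injectiveb x.2, (imN (vf x.1) `|` imN (vf x.2) == N)%fset &
      cb (conjV (vf x.1) g \o conjV (vf x.2) h = nu2)].

Definition lamx (x : TT) : {ffun 'I_k -> option 'I_n} :=
  [ffun j => [pick i | x.1 i == x.2 j]].

Lemma claimC (l : {ffun 'I_k -> option 'I_n}) (s0 : 'I_n -> nat) (t0 : 'I_k -> nat) :
  isPB l -> choiceOK l s0 t0 ->
  Bser C (n + k - rkPB l) (conjV s0 g \o conjV t0 h) (N, nu2) =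
  \sum_(x : TT | Bp x && (lamx x == l)) 1.
Proof.
move=> Hl [is0 it0 Hsb Htb Hrel].
rewrite /Bser /=.
move: Hsb Htb; set M := (n + k - rkPB l)%N => Hsb Htb.
pose s0' := fun i => Ordinal (Hsb i) : 'I_M.
pose t0' := fun j => Ordinal (Htb j) : 'I_M.
have s0'inj : injective s0' by move=> a b /(congr1 val) /is0.
have t0'inj : injective t0' by move=> a b /(congr1 val) /it0.
have cover : forall m : 'I_M, (exists i, s0' i = m) \/ (exists j, t0' j = m).
  pose A := s0' @: [set: 'I_n]; pose B := t0' @: [set: 'I_k].
  have cA : #|A| = n by rewrite card_imset // cardsT card_ord.
  have cB : #|B| = k by rewrite card_imset // cardsT card_ord.
  have AB : A :&: B = t0' @: [set j | l j != None].
    apply/setP => m; rewrite inE; apply/andP/imsetP.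
      case=> /imsetP [i _ ->] /imsetP [j _ E]; exists j => //.
      by rewrite inE ((Hrel j i).2 (esym (congr1 val E))).
    case=> j; rewrite inE => Hj ->; case E: (l j) Hj => [i|] // _.
    split; apply/imsetP; [exists i | exists j] => //.
    by apply: val_inj; apply: (Hrel j i).1.
  have cAB : #|A :&: B| = rkPB l.
    by rewrite AB card_imset //; apply: eq_card => j; rewrite inE.
  have ABT : A :|: B = setT.
    apply/eqP; rewrite eqEcard subsetT cardsT card_ord cardsU cA cB cAB.
    by rewrite leqnn.
  move=> m; have : m \in A :|: B by rewrite ABT inE.
  by case/setUP => /imsetP [i _ ->]; [left|right]; exists i.
pose H := fun s : {ffun 'I_M -> N} => ([ffun i => s (s0' i)], [ffun j => s (t0' j)]) : TT.
have Hinj : injective H.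
  move=> a b E; apply/ffunP => m; case: (cover m) => [[i <-]|[j <-]].
    by have := congr1 (fun x : TT => x.1 i) E; rewrite /= !ffunE.
  by have := congr1 (fun x : TT => x.2 j) E; rewrite /= !ffunE.
have key : forall s : {ffun 'I_M -> N}, injective s ->
    conjV (vf s) (conjV s0 g \o conjV t0 h) = conjV (vf (H s).1) g \o conjV (vf (H s).2) h.
  move=> s iS; apply: functional_extensionality => v.
  have ivs := vf_inj iS.
  rewrite conjV_comp //; last by apply: pres_conjV.
  rewrite /= (@conjV_conj _ _ _ _ _ _ (vf (H s).1) Hsb g is0 ivs pg); last first.
    by move=> a; rewrite /vf ffunE.
  by rewrite (@conjV_conj _ _ _ _ _ _ (vf (H s).2) Htb h it0 ivs ph) // => a; rewrite /vf ffunE.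
transitivity (\sum_(s in [set s : {ffun 'I_M -> N} | injectiveb s && (#|` N| == M)%N &&
       cb (conjV (fun j => val (s j)) (conjV s0 g \o conjV t0 h) = nu2)]) (1 : C)).
  rewrite big_mkcond [RHS]big_mkcond; apply: eq_bigr => s _; rewrite inE pindE.
  by case: (_ && _) => //=; case: cb.
rewrite -(big_imset (fun=> (1 : C)) (in2W Hinj)) /=; apply: eq_bigl => x.
apply/imsetP/andP.
  case=> s; rewrite inE => /andP [/andP [/injectiveP iS /eqP cN] /cbP Hc] ->.
  have surj : forall y : N, exists m, s m = y.
    move=> y; have : y \in codom s.
      by apply: inj_card_onto => //; rewrite card_ord -cardfE cN.
    by case/codomP => m ->; exists m.
  split.
    apply/and4P; split.
    - by apply/injectiveP => a b; rewrite !ffunE => /iS /s0'inj.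
    - by apply/injectiveP => a b; rewrite !ffunE => /iS /t0'inj.
    - apply/eqP/fsetP => y; apply/idP/idP.
        by case/fsetUP => /(fsubsetP (imN_sub _)).
      move=> Hy; have [m Em] := surj [` Hy]%fset.
      apply/fsetUP; case: (cover m) => [[i Ei]|[j Ej]]; [left|right]; apply/imNP.
        by exists i; rewrite /vf /= ffunE Ei Em.
      by exists j; rewrite /vf /= ffunE Ej Em.
    - by apply/cbP; rewrite -key.
  apply/eqP/ffunP => j; rewrite !ffunE /=.
  case E: (l j) => [i|].
    have Et : t0' j = s0' i by apply: val_inj; apply: (Hrel j i).1.
    case: pickP => [i' /eqP|/(_ i)]; last by rewrite !ffunE Et eqxx.
    by rewrite !ffunE Et => /iS /s0'inj ->.
  case: pickP => [i' |//]; rewrite !ffunE => /eqP /iS Ei'.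
  by have := (Hrel j i').2 (esym (congr1 val Ei')); rewrite E.
case=> /and4P [/injectiveP i1 /injectiveP i2 /eqP HU /cbP Hc] /eqP Hlx.
have hlam : forall i j, t0' j = s0' i -> x.1 i = x.2 j.
  move=> i j E; have : l j = Some i by apply/(Hrel j i); exact: (congr1 val E).
  by rewrite -Hlx ffunE; case: pickP => [i' /eqP E' [<-] | //].
have hlam2 : forall i j, x.1 i = x.2 j -> t0' j = s0' i.
  move=> i j E; have : lamx x j = Some i.
    rewrite ffunE; case: pickP => [i' /eqP E'|/(_ i)]; last by rewrite E eqxx.
    by congr Some; apply: i1; rewrite E' E.
  by rewrite Hlx => /(Hrel j i) E'; apply: val_inj.
have ex : forall m : 'I_M, exists y : N,
    (forall i, s0' i = m -> y = x.1 i) /\ (forall j, t0' j = m -> y = x.2 j).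
  move=> m; case: (cover m) => [[i Ei]|[j Ej]].
    exists (x.1 i); split => [i' Ei'|j Ej].
      by congr (x.1 _); apply: s0'inj; rewrite Ei Ei'.
    by apply: hlam; rewrite Ej Ei.
  exists (x.2 j); split => [i Ei|j' Ej'].
    by symmetry; apply: hlam; rewrite Ej Ei.
  by congr (x.2 _); apply: t0'inj; rewrite Ej Ej'.
have [sf Hsf] := fin_all_exists ex.
have Hs1 : forall i, sf (s0' i) = x.1 i := fun i => (Hsf _).1 i erefl.
have Hs2 : forall j, sf (t0' j) = x.2 j := fun j => (Hsf _).2 j erefl.
have HE : H (finfun sf) = x.
  rewrite /H; case: x i1 i2 HU Hc Hlx hlam hlam2 ex Hsf Hs1 Hs2 => [x1 x2] /= *; congr pair; apply/ffunP => a; rewrite !ffunE; auto.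
have iS : injective (finfun sf).
  move=> m1 m2; rewrite !ffunE.
  case: (cover m1) (cover m2) => [[i1' <-]|[j1 <-]] [[i2' <-]|[j2 <-]]; rewrite ?Hs1 ?Hs2.
  - by move/i1 ->.
  - by move/hlam2 ->.
  - by move/esym/hlam2 ->.
  - by move/i2 ->.
exists (finfun sf) => //.
rewrite inE; apply/andP; split; [apply/andP; split|].
- exact/injectiveP.
- rewrite cardfE; apply/eqP/eqP; rewrite eqn_leq; apply/andP; split.
    rewrite -(card_ord M) -(card_codom iS); apply/subset_leq_card/subsetP => y _.
    have : val y \in (imN (vf x.1) `|` imN (vf x.2))%fset by rewrite HU; apply: fsvalP.
    move=> /fsetUP [] /imNP [a Ea].
      by apply/codomP; exists (s0' a); rewrite ffunE Hs1; apply: val_inj.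
    by apply/codomP; exists (t0' a); rewrite ffunE Hs2; apply: val_inj.
  by rewrite -(card_ord M) -(card_codom iS) max_card.
- by apply/cbP; rewrite key // HE.
Qed.


Definition ee (x : TT) : ceq (LB I X * LB I X) :=
  ((imN (vf x.1), conjV (vf x.1) g), (imN (vf x.2), conjV (vf x.2) h)).

Lemma Bser_ee x0 : Bp x0 ->
  Bser C n g (ee x0).1 * Bser C k h (ee x0).2 =
  \sum_(x : TT | Bp x && (ee x == ee x0)) 1.
Proof.
move=> B0; have sub1 := imN_sub x0.1; have sub2 := imN_sub x0.2.
rewrite /Bser /=.
rewrite (reindexB sub1 (fun u => pind C (conjV u g = conjV (vf x0.1) g))).
rewrite (reindexB sub2 (fun u => pind C (conjV u h = conjV (vf x0.2) h))).
rewrite !sum_cb big_distrl /=.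
under eq_bigr => s _ do rewrite mul1r.
rewrite pair_big_dep /=; apply: eq_bigl => -[s t] /=.
move: B0 => /and4P [_ _ /eqP U0 /cbP Cm0].
apply/idP/idP.
  move=> /andP [/andP [/andP [iS /eqP E1] /cbP C1] /andP [/andP [iT /eqP E2] /cbP C2]].
  apply/andP; split.
    apply/and4P; split => //; first by rewrite /= E1 E2 U0.
    by apply/cbP; rewrite /vf /= C1 C2.
  by apply/eqP; rewrite /ee /vf /= E1 E2 C1 C2.
move=> /andP [/and4P [iS iT _ _] /eqP E].
have E1 := congr1 (fun p : LB I X * LB I X => p.1.1) E.
have E2 := congr1 (fun p : LB I X * LB I X => p.2.1) E.
have C1 := congr1 (fun p : LB I X * LB I X => p.1.2) E.
have C2 := congr1 (fun p : LB I X * LB I X => p.2.2) E.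
rewrite /= in E1 E2 C1 C2.
rewrite iS iT /= E1 E2 !eqxx /=.
by apply/andP; split; apply/cbP.
Qed.

Definition lst := undup (map ee (enum Bp)).

Lemma claimA : \sum_(a <- lst) Bser C n g a.1 * Bser C k h a.2 = \sum_(x : TT | Bp x) 1.
Proof.
transitivity (\sum_(a <- lst) \sum_(x : TT | Bp x) ((ee x == a)%:R : C)).
  rewrite big_seq_cond [RHS]big_seq_cond; apply: eq_bigr => a /andP [Ha _].
  move: Ha; rewrite mem_undup => /mapP [x0]; rewrite mem_enum => B0 ->.
  rewrite Bser_ee // big_mkcondr; apply: eq_bigr => x _; by case: (_ == _).
rewrite exchange_big /=; apply: eq_bigr => x Bx.
rewrite sum_mem1 ?undup_uniq //.
by rewrite mem_undup; apply/mapP; exists x; rewrite ?mem_enum.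
Qed.


Lemma lamxPB x : Bp x -> isPB (lamx x).
Proof.
move=> /and4P [_ i2 _ _]; move/injectiveP: i2 => i2.
apply/forallP => j1; apply/forallP => j2; apply/implyP.
rewrite !ffunE; case: pickP => [i /eqP E1|//] /andP [_ /eqP].
by case: pickP => [i' /eqP E2 [Ei]|//]; subst i'; apply/eqP; apply: i2; rewrite -E1 -E2.
Qed.

Hypotheses (bg : bijective g) (bh : bijective h)
  (fg : forall v, ~~ inV n v -> g v = v) (fh : forall v, ~~ inV k v -> h v = v).

Lemma main_fsum (s0 : {ffun 'I_k -> option 'I_n} -> 'I_n -> nat)
    (t0 : {ffun 'I_k -> option 'I_n} -> 'I_k -> nat)
    (Hst : forall l, isPB l -> choiceOK l (s0 l) (t0 l)) :
  has_fsum (fun p : LB I X * LB I X =>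
      [/\ is_LB p.1, is_LB p.2, (p.1.1 `|` p.2.1)%fset = N & p.1.2 \o p.2.2 = nu2])
    (fun p => Bser C n g p.1 * Bser C k h p.2)
    (\sum_(l : {ffun 'I_k -> option 'I_n} | isPB l)
        Bser C (n + k - rkPB l)%N (conjV (s0 l) g \o conjV (t0 l) h) (N, nu2)).
Proof.
exists lst; split.
- exact: (@uniq_NoDup (ceq (LB I X * LB I X)) lst (undup_uniq _)).
- move=> a /(@In_mem (ceq (LB I X * LB I X))); rewrite mem_undup => /mapP [x]; rewrite mem_enum.
  move=> /and4P [/injectiveP i1 /injectiveP i2 /eqP U /cbP Cm] ->.
  split => //.
    by apply: is_LB_conj => //; apply: vf_inj.
  by apply: is_LB_conj => //; apply: vf_inj.
- move=> [[F1 f1] [F2 f2]] [L1 L2 /= U Cm] Hnz.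
  have sub1 : (F1 `<=` N)%fset by rewrite -U fsubsetUl.
  have sub2 : (F2 `<=` N)%fset by rewrite -U fsubsetUr.
  have nz1 : Bser C n g (F1, f1) != 0.
    by apply/eqP => E; apply: Hnz; rewrite /= E mul0r.
  have nz2 : Bser C k h (F2, f2) != 0.
    by apply/eqP => E; apply: Hnz; rewrite /= E mulr0.
  move: nz1; rewrite /Bser /= (reindexB sub1 (fun u => pind C (conjV u g = f1))) sum_cb.
  move/pick_nz => [s /andP [/andP [iS /eqP Es] /cbP Cs]].
  move: nz2; rewrite /Bser /= (reindexB sub2 (fun u => pind C (conjV u h = f2))) sum_cb.
  move/pick_nz => [t /andP [/andP [iT /eqP Et] /cbP Ct]].
  apply/(@In_mem (ceq (LB I X * LB I X))); rewrite mem_undup; apply/mapP; exists (s, t).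
    rewrite mem_enum; apply/and4P; split => //; first by rewrite /= Es Et U.
    by apply/cbP; rewrite /vf /= Cs Ct.
  by rewrite /ee /vf /= Es Et Cs Ct.
- rewrite claimA (partition_big lamx (fun l => isPB l)); last exact: lamxPB.
  apply: eq_bigr => l Hl; rewrite claimC //; exact: Hst.
Qed.

End Main.


Theorem proposition2p2 (C : numClosedFieldType) (I : finType) (X : countType)
    (G : (V I X -> V I X) -> Prop) (HG : is_Ginf G)
    (n k : nat) (g h : V I X -> V I X) (Hg : inGn G n g) (Hh : inGn G k h)
    (s0 : {ffun 'I_k -> option 'I_n} -> 'I_n -> nat)
    (t0 : {ffun 'I_k -> option 'I_n} -> 'I_k -> nat)
    (Hst : forall l, isPB l -> choiceOK l (s0 l) (t0 l)) :
  is_conv (Bser C n g) (Bser C k h)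
    (fun x => \sum_(l : {ffun 'I_k -> option 'I_n} | isPB l)
        Bser C (n + k - rkPB l)%N (conjV (s0 l) g \o conjV (t0 l) h) x).
Proof.
case: HG => Hbij _ _ _ _.
case: Hg => Gg fg; case: Hh => Gh fh.
have bg := (Hbij _ Gg).1; have bh := (Hbij _ Gh).1.
have pg := pres_of bg fg; have ph := pres_of bh fh.
move=> [N nu2].
exact: (main_fsum C pg ph N nu2 bg bh fg fh Hst).
Qed.
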